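(* Let $q\in[0,1]$ and let $X_1,\dots,X_m$ be real numbers (observed $z$-statistics) with associated one-sided p-values $P_i=\Phi(X_i)$, where $\Phi$ is the standard normal cumulative distribution function. Let $P_{(1)}\le\dots\le P_{(m)}$ be the ordered p-values, $I^*=\max\{i: P_{(i)}\le (i/m)q\}$ and $P^*=P_{(I^* )}$ (with the convention that if no such $i$ exists the set $\{i:P_i\le P^*\}$ below is empty). Consider the iteration $\mathcal S^1=\{1,\dots,m\}$ and, for $t=1,2,\dots$, $$U_i^t=X_i+\Phi^{-1}\big(1-q|\mathcal S^t|/m\big),\ i\in\mathcal S^t,\qquad \mathcal S^{t+1}=\{i\in\mathcal S^t: U_i^t\le 0\}.$$ Then this iteration converges in finite time: there is a finite $T\ge1$ such that $\mathcal S^{T+1}=\mathcal S^T$ (taking $T$ to be the first such index) and $\mathcal S^t=\mathcal S^T$ for all $t\ge T$. Moreover, $\mathcal S^T=\{i: P_i\le P^*\}$, i.e. the set of hypotheses $H_i:\theta_i\ge 0$ rejected by the Benjamini–Hochberg procedure at level $q$.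
   Context: In the motivating model $X_i\sim\mathcal N(\theta_i,1)$ independently; the iteration is the repeated application of the Benjamini–Yekutieli one-sided confidence interval adjustment $(-\infty,U_i^t)$ followed by keeping only those intervals that do not cover $0$. The Benjamini–Hochberg procedure at level $q$ rejects $H_i$ iff $P_i\le P^*$. *)

(* Defs.v *)
From HB Require Import structures.
From mathcomp Require Import all_boot all_order all_algebra.
From mathcomp Require Import all_classical all_reals all_analysis.
Set Implicit Arguments. Unset Strict Implicit. Unset Printing Implicit Defensive.
Import Order.TTheory GRing.Theory Num.Theory.

Local Open Scope classical_set_scope.
Local Open Scope ring_scope.

Definition Phi {R : realType} (x : R) : R :=
  fine (normal_prob 0 1 `]-oo, x]).

(* Quantile (generalized inverse) of Phi, extended-real valued:
   Phiinv p = inf {x | p <= Phi x}.  For p in (0,1) this is the usual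
   Phi^{-1}(p); Phiinv 1 = +oo (empty set), Phiinv 0 = -oo. *)
Definition Phiinv {R : realType} (p : R) : \bar R :=
  ereal_inf [set (x%:E)%E | x in [set x : R | p <= Phi x]].

Definition by_step {R : realType} (m : nat) (X : 'I_m -> R) (q : R)
  (S : {set 'I_m}) : {set 'I_m} :=
  [set i in S |
     ((X i)%:E + Phiinv (1 - q * #|S|%:R / m%:R) <= 0)%E ].

(* S^t for t >= 1:  S^1 = {1..m}, S^{t+1} = by_step S^t. *)
Definition Siter {R : realType} (m : nat) (X : 'I_m -> R) (q : R) (t : nat)
  : {set 'I_m} :=
  iter t.-1 (by_step X q) (finset.setT : {set 'I_m}).

Definition pval {R : realType} (m : nat) (X : 'I_m -> R) (i : 'I_m) : R :=
  Phi (X i).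

(* ordered p-values P_(1) <= ... <= P_(m); P_(k) = psorted`_(k-1) *)
Definition psorted {R : realType} (m : nat) (X : 'I_m -> R) : seq R :=
  sort <=%R [seq pval X i | i <- enum 'I_m].

Definition BH_cand {R : realType} (m : nat) (X : 'I_m -> R) (q : R) : seq nat :=
  seq.filter (fun k : nat => nth 0 (psorted X) k.-1 <= k%:R / m%:R * q) (iota 1 m).

Definition BH_reject {R : realType} (m : nat) (X : 'I_m -> R) (q : R)
  : {set 'I_m} :=
  match BH_cand X q with
  | [::] => (finset.set0 : {set 'I_m})
  | _ :: _ =>
      let Istar := \max_(k <- BH_cand X q) k in
      [set i | pval X i <= nth 0 (psorted X) Istar.-1]
  end.

(* Main.v *)
Require Import Defs.
From HB Require Import structures.
From mathcomp Require Import all_boot all_order all_algebra.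
From mathcomp Require Import all_classical all_reals all_analysis.
From mathcomp Require Import measurable_realfun lebesgue_integral ftc probability.
From mathcomp Require Import lra.
Set Implicit Arguments. Unset Strict Implicit. Unset Printing Implicit Defensive.
Import Order.TTheory GRing.Theory Num.Theory.
Local Open Scope ring_scope.
Section PhiFacts.
Variable R : realType.
Local Open Scope classical_set_scope.

Let idTR : measurableTypeR R -> R := idfun.
#[local] HB.instance Definition _ :=
  @isMeasurableFun.Build _ _ _ _ idTR (@measurable_id _ _ setT).
Let F := (idTR : {RV (normal_prob (0:R) 1) >-> R}).

Lemma PhiE (x : R) : (Phi x)%:E = normal_prob 0 1 `]-oo, x].
Proof. by rewrite /Phi fineK// fin_num_measure. Qed.

Let cdfE x : cdf F x = (Phi x)%:E.
Proof. by rewrite PhiE /cdf /distribution /pushforward preimage_id. Qed.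

Lemma Phi_nd (x y : R) : x <= y -> Phi x <= Phi y.
Proof.
move=> xy; rewrite -lee_fin !PhiE; apply: le_measure; rewrite ?inE//.
exact: subitvPr.
Qed.

Lemma Phi_ge0 (x : R) : 0 <= Phi x.
Proof. by rewrite -lee_fin PhiE. Qed.

Lemma Phi_le1 (x : R) : Phi x <= 1.
Proof. by rewrite -lee_fin PhiE probability_le1. Qed.

End PhiFacts.
Section PhiFacts2.
Variable R : realType.
Local Open Scope classical_set_scope.

Lemma normal_pdfN (t : R) : normal_pdf 0 1 (-t) = normal_pdf 0 1 t.
Proof.
rewrite /normal_pdf oner_eq0 /normal_fun !subr0.
by rewrite sqrrN.
Qed.

Lemma Phi_sym (x : R) : Phi (-x) = 1 - Phi x.
Proof.
apply/EFin_inj; rewrite EFinB !PhiE.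
rewrite /normal_prob.
rewrite ge0_integration_by_substitutionNy; last 2 first.
- exact: (@continuous_subspaceT R^o R^o _ _ (@continuous_normal_pdf R 0 1 (oner_neq0 R))).
- by move=> t _; exact: normal_pdf_ge0.
under eq_integral do rewrite /= normal_pdfN.
rewrite -integral_itv_obnd_cbnd; last first.
  apply/measurable_EFinP; apply: measurable_funTS; exact: measurable_normal_pdf.
rewrite -setCitvl.
have := @probability_setC _ _ R (normal_prob (0:R) 1) `]-oo, x] (measurable_itv _).
by rewrite /normal_prob.
Qed.

End PhiFacts2.
Section PhiFacts3.
Variable R : realType.
Local Open Scope classical_set_scope.

Let idTR : measurableTypeR R -> R := idfun.
#[local] HB.instance Definition _ :=
  @isMeasurableFun.Build _ _ _ _ idTR (@measurable_id _ _ setT).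
Let F := (idTR : {RV (normal_prob (0:R) 1) >-> R}).

Let cdfE' : cdf F = (fun x => (Phi x)%:E).
Proof. by apply/funext => x; rewrite PhiE /cdf /distribution /pushforward preimage_id. Qed.

Lemma Phi_rc (y c : R) : (forall z, y < z -> c <= Phi z) -> c <= Phi y.
Proof.
move=> H.
have h := @cdf_right_continuous _ _ _ _ F y.
rewrite cdfE' in h.
have Fap : Filter y^'+ by exact: at_right_proper_filter.
have h' := fine_cvg h.
apply: (cvgr_to_ge (h' Fap)).
near=> z; apply: H.
near: z; exact: nbhs_right_gt.
Unshelve. all: by end_near.
Qed.

Lemma Phi_big (c : R) : c < 1 -> exists x, c < Phi x.
Proof.
move=> c1.
have h := @cvg_cdfy1 _ _ _ _ F.
rewrite cdfE' in h.
have h' := fine_cvg h.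
have := cvgr_gt 1 (h' _) c c1.
move=> [M [_ HM]].
exists (M + 1); apply/HM; rewrite ltrDl ltr01 //.
Qed.

End PhiFacts3.
Section PhiFacts4.
Variable R : realType.
Local Open Scope classical_set_scope.

Lemma Phi_gt0 (x : R) : 0 < Phi x.
Proof.
rewrite -lte_fin PhiE.
pose B := `|x| + 1.
pose k := normal_peak (1:R) * expR (- (B ^+ 2) / (1 ^+ 2 *+ 2)).
have k0 : 0 < k by rewrite mulr_gt0 ?expR_gt0 ?normal_peak_gt0 ?oner_neq0.
pose I := (`]x - 1, x] : set R).
have mI : measurable I by exact: measurable_itv.
apply: (@lt_le_trans _ _ (normal_prob 0 1 I)); last first.
  by apply: le_measure; rewrite ?inE//; apply: subset_itvr; rewrite bnd_simp.
rewrite /normal_prob.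
apply: (@lt_le_trans _ _ (\int[lebesgue_measure]_(t in I) (cst k%:E) t)%E).
  have LI : (lebesgue_measure I = 1)%E.
    rewrite /I lebesgue_measure_itv /= lte_fin ltrBlDr ltrDl ltr01.
    by rewrite -EFinD opprB addrC subrK.
  rewrite integral_cst//; move: LI; rewrite /= => ->; by rewrite mule1 lte_fin.
apply: ge0_le_integral => //.
- by move=> t _; rewrite lee_fin ltW.
- apply/measurable_EFinP; apply: measurable_funTS; exact: measurable_normal_pdf.
move=> t; rewrite /I /= in_itv /= => /andP[t1 t2].
rewrite lee_fin /normal_pdf oner_eq0 /k /normal_fun subr0.
rewrite ler_pM2l ?normal_peak_gt0 ?oner_neq0 // ler_expR.
rewrite !mulNr lerN2 ler_pM2r; last by rewrite invr_gt0 expr1n mulr2n ltr_pwDl.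
have h1 := ler_norm x.
have h2 : - x <= `|x| by rewrite -normrN ler_norm.
rewrite /B; nra.
Qed.

Lemma Phi_lt1 (x : R) : Phi x < 1.
Proof. by rewrite -subr_gt0 -Phi_sym Phi_gt0. Qed.

End PhiFacts4.
Section PhiinvFacts.
Variable R : realType.
Local Open Scope classical_set_scope.

Lemma Phiinv_le0 (c : R) : c <= 0 -> Phiinv c = -oo%E.
Proof.
move=> c0.
have H : forall r : R, (Phiinv c <= r%:E)%E.
  move=> r; apply: ereal_inf_lbound; exists r => //=.
  exact: (le_trans c0 (Phi_ge0 r)).
case E : (Phiinv c) => [s| |] //.
- by have := H (s - 1); rewrite E lee_fin => h; exfalso; lra.
- by have := H 0; rewrite E.
Qed.

Lemma Phiinv_ge1 (c : R) : 1 <= c -> Phiinv c = +oo%E.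
Proof.
move=> c1; rewrite /Phiinv.
suff -> : [set x : R | c <= Phi x] = set0 by rewrite image_set0 ereal_inf0.
apply/seteqP; split => x //= cx.
by have := lt_le_trans (Phi_lt1 x) (le_trans c1 cx); rewrite ltxx.
Qed.

Lemma Phiinv_mid (c : R) : 0 < c < 1 ->
  exists y : R, [/\ Phiinv c = y%:E, c <= Phi y &
                  forall x, c <= Phi x -> y <= x].
Proof.
move=> /andP[c0 c1].
pose S := [set x : R | c <= Phi x].
have [x0 Hx0] := Phi_big c1.
have S0 : S !=set0 by exists x0; exact: ltW.
have [M HM] : exists M, 1 - c < Phi M by apply: Phi_big; rewrite ltrBlDr ltrDl.
have lbS : has_lbound S.
  exists (- M) => x /= cx.
  rewrite leNgt; apply/negP => xM.
  have : Phi x <= Phi (- M) by apply: Phi_nd; exact: ltW.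
  rewrite Phi_sym => h.
  have : c <= 1 - Phi M by exact: le_trans cx h.
  lra.
exists (inf S); split.
- by rewrite /Phiinv ereal_inf_EFin.
- apply: Phi_rc => z yz.
  have [x Sx xz] := inf_lt S0 yz.
  exact: le_trans Sx (Phi_nd (ltW xz)).
- by move=> x cx; apply: ge_inf.
Qed.

Lemma step_cond (x a : R) : 0 <= a ->
  ((x%:E + Phiinv (1 - a) <= 0)%E = (Phi x <= a)).
Proof.
move=> a0.
have [a1|a1] := leP 1 a.
  rewrite Phiinv_le0; last by lra.
  rewrite addeNy leNye; symmetry; apply/idP.
  exact: le_trans (Phi_le1 x) a1.
have [->|an0] := eqVneq a 0.
  rewrite subr0 Phiinv_ge1// addey//.
  by rewrite (lt_geF (Phi_gt0 x)); apply/negbTE; rewrite -ltNge ltry.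
have ap : 0 < a by rewrite lt_neqAle eq_sym an0 a0.
have [y [-> cy ylb]] := Phiinv_mid (c := 1 - a) ltac:(apply/andP; split; lra).
rewrite -EFinD lee_fin.
apply/idP/idP => h.
- have : Phi x <= Phi (- y) by apply: Phi_nd; lra.
  rewrite Phi_sym => h'; lra.
- have : y <= - x by apply: ylb; rewrite Phi_sym; lra.
  lra.
Qed.

End PhiinvFacts.
Lemma count_enum_ord (m : nat) (P : pred 'I_m) :
  count P (enum 'I_m) = #|[set i | P i]|.
Proof.
rewrite cardE -size_filter; apply: perm_size; apply: uniq_perm.
- exact/filter_uniq/enum_uniq.
- exact: enum_uniq.
- by move=> i; rewrite mem_filter !mem_enum !inE andbT.
Qed.

Section OrderStats.
Variables (R : realType) (m : nat) (X : 'I_m -> R).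

Let s := psorted X.

Lemma size_psorted : size s = m.
Proof. by rewrite /s /psorted size_sort size_map size_enum_ord. Qed.

Lemma count_psorted (v : R) :
  count (fun x => x <= v) s = #|[set i | pval X i <= v]|.
Proof.
rewrite /s /psorted.
rewrite (permP (permEl (perm_sort _ _))) count_map.
exact: count_enum_ord.
Qed.

Lemma nth_psorted_le (k : nat) (v : R) : (k < m)%N ->
  (s`_k <= v) = (k < #|[set i | (pval X i <= v)%R]|)%N.
Proof.
move=> km.
have sS : sorted <=%R s by apply: sort_sorted; exact: le_total.
have mono : forall i j, (i <= j)%N -> (j < m)%N -> s`_i <= s`_j.
  move=> i j ij jm.
  apply: (sorted_leq_nth le_trans lexx 0 sS); rewrite ?inE ?size_psorted //.
  exact: leq_ltn_trans ij jm.
rewrite -count_psorted.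
rewrite -[in RHS](mkseq_nth 0 s) /mkseq count_map size_psorted.
apply/idP/idP => h.
- have Em : m = (k.+1 + (m - k.+1))%N by rewrite subnKC.
  rewrite [in iota 0 m]Em iotaD count_cat add0n.
  apply: leq_trans (leq_addr _ _).
  rewrite (@eq_in_count _ _ predT) ?count_predT ?size_iota //.
  move=> j; rewrite mem_iota /= add0n ltnS => jk.
  exact: le_trans (mono j k jk km) h.
- apply: contraLR h; rewrite -ltNge -leqNgt => h.
  have Em : m = (k + (m - k))%N by rewrite subnKC // ltnW.
  rewrite [in iota 0 m]Em iotaD count_cat add0n.
  rewrite [X in (_ + X <= _)%N](@eq_in_count _ _ pred0) ?count_pred0 ?addn0.
    by apply: leq_trans (count_size _ _) _; rewrite size_iota.
  move=> j; rewrite mem_iota -Em => /andP[kj jm] /=.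
  apply/negbTE; rewrite -ltNge; exact: lt_le_trans h (mono k j kj jm).
Qed.

Lemma psorted_card_le (S : {set 'I_m}) (v : R) : (0 < #|S|)%N ->
  (forall i, i \in S -> pval X i <= v) -> s`_(#|S|.-1) <= v.
Proof.
move=> S0 H.
have Sm : (#|S| <= m)%N by rewrite -[X in (_ <= X)%N]card_ord; exact: max_card.
rewrite nth_psorted_le; last by rewrite prednK.
rewrite prednK //.
apply: subset_leq_card; apply/fintype.subsetP => i iS; rewrite inE; exact: H.
Qed.

Lemma psorted_card_ge (I : nat) : (0 < I)%N -> (I <= m)%N ->
  (I <= #|[set i | (pval X i <= s`_(I.-1))%R]|)%N.
Proof.
move=> I0 Im.
have := @nth_psorted_le I.-1 (s`_I.-1) ltac:(by rewrite prednK).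
by rewrite lexx => /esym; rewrite prednK.
Qed.

End OrderStats.

Lemma bigmax_seq_in (a : nat) (l : seq nat) : \max_(k <- a :: l) k \in a :: l.
Proof.
elim: l a => [|b l IH] a; first by rewrite big_cons big_nil maxn0 mem_head.
rewrite big_cons; have := IH b; set M := \max_(k <- b :: l) k => HM.
case: (leqP a M) => h.
- by rewrite in_cons HM orbT.
- by rewrite mem_head.
Qed.

Section Main.
Variables (R : realType) (m : nat) (X : 'I_m -> R) (q : R).

Lemma by_stepE (q0 : 0 <= q) (S : {set 'I_m}) :
  by_step X q S = [set i in S | pval X i <= q * #|S|%:R / m%:R].
Proof.
apply/finset.setP => i; rewrite !inE step_cond //.
by rewrite divr_ge0 // mulr_ge0.
Qed.

Lemma mem_cand k : (k \in BH_cand X q) =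
  ((psorted X)`_(k.-1) <= k%:R / m%:R * q) && (0 < k <= m)%N.
Proof. by rewrite mem_filter mem_iota add1n ltnS. Qed.

Lemma BH_spec :
  (BH_cand X q = [::] /\ BH_reject X q = finset.set0) \/
  exists I, [/\ I \in BH_cand X q, (forall k, k \in BH_cand X q -> k <= I)%N &
     BH_reject X q = [set i | (pval X i <= (psorted X)`_(I.-1))%R]].
Proof.
rewrite /BH_reject; case E : (BH_cand X q) => [|a l]; [by left | right].
exists (\max_(k <- a :: l) k); split => //.
- exact: bigmax_seq_in.
- by move=> k kin; exact: (@leq_bigmax_seq _ _ xpredT id k kin).
Qed.

Lemma f_R (q0 : 0 <= q) (S : {set 'I_m}) :
  BH_reject X q \subset S -> BH_reject X q \subset by_step X q S.
Proof.
rewrite by_stepE //.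
case: BH_spec => [[_ ->] | [I [Ic Imax ->]]] RS; first by rewrite finset.sub0set.
move: (Ic); rewrite mem_cand => /andP[hI /andP[I0 Im]].
have IS : (I <= #|S|)%N.
  exact: leq_trans (psorted_card_ge X I0 Im) (subset_leq_card RS).
apply/fintype.subsetP => i iR.
rewrite inE (fintype.subsetP RS _ iR) /=.
move: iR; rewrite inE => hi.
apply: le_trans hi (le_trans hI _).
have -> : q * #|S|%:R / m%:R = #|S|%:R / m%:R * q by rewrite -mulrA mulrC.
rewrite ler_wpM2r // ler_pM2r ?invr_gt0 ?ltr0n ?ler_nat //.
exact: leq_trans I0 Im.
Qed.

Lemma f_fix (q0 : 0 <= q) (S : {set 'I_m}) :
  BH_reject X q \subset S -> by_step X q S = S -> S = BH_reject X q.
Proof.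
move=> RS; rewrite by_stepE // => fS.
have HS : forall i, i \in S -> pval X i <= q * #|S|%:R / m%:R.
  move=> i iS.
  have : i \in [set i in S | pval X i <= q * #|S|%:R / m%:R] by rewrite fS.
  by rewrite inE => /andP[].
case: (posnP #|S|) => [S0 | Spos].
  by move: RS; rewrite (cards0_eq S0) finset.subset0 => /eqP ->.
have Sm : (#|S| <= m)%N by rewrite -[X in (_ <= X)%N]card_ord; exact: max_card.
have hk := psorted_card_le Spos HS.
have kin : #|S| \in BH_cand X q.
  rewrite mem_cand Spos Sm andbT.
  have e : q * #|S|%:R / m%:R = #|S|%:R / m%:R * q by rewrite -mulrA mulrC.
  by rewrite andbT -e.
case: BH_spec => [[Ecand _] | [I [Ic Imax ER]]].
  by rewrite Ecand in kin.
have kI := Imax _ kin.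
move: (Ic); rewrite mem_cand => /andP[_ /andP[I0 Im]].
have := psorted_card_ge X I0 Im; rewrite -ER => hR.
apply/eqP; rewrite eq_sym eqEcard RS /=.
exact: leq_trans kI hR.
Qed.

End Main.

Unset Implicit Arguments.
Set Strict Implicit.

Theorem proposition1 (R : realType) (m : nat) (q : R) (X : 'I_m -> R) :
  (0 < m)%N -> 0 <= q <= 1 ->
  exists T : nat,
    [/\ (1 <= T)%N,
        Siter X q T.+1 = Siter X q T,
        (forall t : nat, (1 <= t)%N -> (t < T)%N -> Siter X q t.+1 <> Siter X q t),
        (forall t : nat, (T <= t)%N -> Siter X q t = Siter X q T)
      & Siter X q T = BH_reject X q].
Proof.
move=> m0 /andP[q0 q1].
pose f := by_step X q.
pose A n := iter n f finset.setT.
have AS : forall t, (1 <= t)%N -> Siter X q t = A t.-1 by [].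
have AR : forall n, BH_reject X q \subset A n.
  elim => [|n IH]; first exact: finset.subsetT.
  by rewrite /A iterS; apply: f_R.
have Asub : forall n, A n.+1 \subset A n.
  move=> n; rewrite /A iterS -/(A n) /f by_stepE //.
  by apply/fintype.subsetP => i; rewrite inE => /andP[].
have Acard : forall n, (forall j, (j < n)%N -> A j.+1 != A j) -> (#|A n| + n <= m)%N.
  elim => [|n IH] H; first by rewrite addn0 cardsT card_ord.
  have h1 : (#|A n.+1| < #|A n|)%N.
    apply: proper_card; rewrite finset.properEneq Asub andbT; exact: H.
  have := IH (fun j jn => H j (ltnW jn)).
  by move=> h2; rewrite addnS; apply: leq_trans h2; rewrite ltn_add2r.
have exP : exists n, A n.+1 == A n.
  case: (boolP [exists n : 'I_m.+1, A n.+1 == A n]) => [/existsP [n hn] | /existsPn H].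
    by exists n.
  have := Acard m.+1 (fun j jm => H (Ordinal jm)).
  by rewrite addnS ltnNge leq_addl.
case: (ex_minnP exP) => T' hT' Tmin.
move/eqP: hT' => hT'.
have stay : forall d, iter (T' + d) f finset.setT = iter T' f finset.setT.
  elim => [|d IH]; first by rewrite addn0.
  by rewrite addnS iterS IH; exact: hT'.
exists T'.+1; split => //.
- case => // t' _ tT /eqP h.
  by have := Tmin _ h; rewrite leqNgt -ltnS tT.
- move=> t tT; rewrite !AS //; last exact: leq_trans tT.
  have tT' : (T' <= t.-1)%N by rewrite -ltnS (ltn_predK tT).
  rewrite /= -(subnKC tT'); exact: stay.
- by rewrite AS //=; apply: f_fix => //.
Qed.
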